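(* Let $R=[x_1,x_2]\times[y_1,y_2]\subseteq\overline{\mathbb{R}}^2$ be an admissible rectangle and let $A$ be a real function defined on its four corners which is increasing in each variable on the corners, i.e. $A(x_1,y)\leqslant A(x_2,y)$ for $y\in\{y_1,y_2\}$ and $A(x,y_1)\leqslant A(x,y_2)$ for $x\in\{x_1,x_2\}$. Then the bilinear interpolation $A^{\mathrm{BL}}$ of $A$ on $R$ is nondecreasing in each variable on $R$. Moreover, for every subrectangle $R_1=[u_1,u_2]\times[v_1,v_2]\subseteq R$ (with $u_1<u_2$, $v_1<v_2$) we have, writing $V$ for the volume with respect to $A^{\mathrm{BL}}$: (a) $V(R_1)>0$ if and only if $V(R)>0$; (b) $V(R_1)<0$ if and only if $V(R)<0$; (c) $V(R_1)=0$ if and only if $V(R)=0$.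
   Context: $\overline{\mathbb{R}}=\mathbb{R}\cup\{-\infty,\infty\}$. An admissible rectangle is $[x_1,x_2]\times[y_1,y_2]$ with $x_1<x_2$, $y_1<y_2$ in $\overline{\mathbb{R}}$ such that in each coordinate at most one endpoint is infinite, and if $x_1=-\infty$ then $x_2$ is finite with $x_2<0$, if $x_2=\infty$ then $x_1$ is finite with $x_1>0$ (and the same for $y_1,y_2$). (Such rectangles are exactly the cells of a mesh $\delta_x\times\delta_y$ with $\delta_x=\{-\infty=x_0<\dots<x_p=\infty\}$, $\delta_y=\{-\infty=y_0<\dots<y_q=\infty\}$ each containing a finite strictly positive and a finite strictly negative point.) For an interval $[x_1,x_2]$ of this kind define weights $\lambda_1,\lambda_2$ on $[x_1,x_2]$: if $x_1,x_2$ are both finite, $\lambda_2(x)=\frac{x-x_1}{x_2-x_1}$; if $x_1=-\infty$, $\lambda_2(x)=\frac{x_2}{x}$ (equal to $0$ at $x=-\infty$); in these two cases $\lambda_1=1-\lambda_2$; if $x_2=\infty$, $\lambda_1(x)=\frac{x_1}{x}$ (equal to $0$ at $x=\infty$) and $\lambda_2=1-\lambda_1$. Define $\mu_1,\mu_2$ on $[y_1,y_2]$ in the same way. The bilinear interpolation of $A$ is $A^{\mathrm{BL}}(x,y)=\sum_{k,l\in\{1,2\}}\lambda_k(x)\mu_l(y)A(x_k,y_l)$; it is the unique function on $R$ agreeing with $A$ at the corners whose one-dimensional sections parallel to the axes are linear (between two finite endpoints) or linear rational with pole at $0$ (between a finite and an infinite endpoint). The volume of a rectangle $[u_1,u_2]\times[v_1,v_2]$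 with respect to a function $G$ is $V_G=G(u_1,v_1)+G(u_2,v_2)-G(u_2,v_1)-G(u_1,v_2)$. *)

(* Defs.v *)
From mathcomp Require Import all_boot all_order all_algebra.
From mathcomp Require Import boolp classical_sets reals constructive_ereal.
Set Implicit Arguments. Unset Strict Implicit. Unset Printing Implicit Defensive.
Import Order.TTheory GRing.Theory Num.Theory.
Local Open Scope ring_scope.
Local Open Scope ereal_scope.

Section Defs.
Variable R : realType.

Definition admissible_interval (a b : \bar R) : Prop :=
  a < b /\
  match a, b with
  | EFin _, EFin _ => True
  | -oo, EFin b' => (b' < 0)%R
  | EFin a', +oo => (0 < a')%R
  | _, _ => False
  end.

Definition admissible_rectangle (x1 x2 y1 y2 : \bar R) : Prop :=
  admissible_interval x1 x2 /\ admissible_interval y1 y2.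

(* weight lambda_2 on [a,b] (meaningful for x in [a,b]) *)
Definition lam2 (a b x : \bar R) : R :=
  match a, b, x with
  | EFin a', EFin b', EFin x' => ((x' - a') / (b' - a'))%R
  | -oo, EFin b', EFin x' => (b' / x')%R
  | -oo, EFin _, -oo => 0%R
  | EFin a', +oo, EFin x' => (1 - a' / x')%R   (* lambda_1 = a/x *)
  | EFin a', +oo, +oo => 1%R
  | _, _, _ => 0%R
  end.

Definition lam1 (a b x : \bar R) : R := (1 - lam2 a b x)%R.

Definition bilinear_interp (x1 x2 y1 y2 : \bar R) (A : \bar R -> \bar R -> R)
  (x y : \bar R) : R :=
  (lam1 x1 x2 x * lam1 y1 y2 y * A x1 y1 +
   lam1 x1 x2 x * lam2 y1 y2 y * A x1 y2 +
   lam2 x1 x2 x * lam1 y1 y2 y * A x2 y1 +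
   lam2 x1 x2 x * lam2 y1 y2 y * A x2 y2)%R.

Definition volume (G : \bar R -> \bar R -> R) (u1 u2 v1 v2 : \bar R) : R :=
  (G u1 v1 + G u2 v2 - G u2 v1 - G u1 v2)%R.

End Defs.

(* Main.v *)
Require Import Defs.
From mathcomp Require Import all_boot all_order all_algebra.
From mathcomp Require Import boolp classical_sets reals constructive_ereal.
From mathcomp Require Import ring lra.
Import Order.TTheory GRing.Theory Num.Theory.
Local Open Scope ring_scope.

Lemma lam2_strict (R : realType) (a b u v : \bar R) :
  admissible_interval a b -> (a <= u)%E -> (u < v)%E -> (v <= b)%E ->
  lam2 a b u < lam2 a b v.
Proof.
case: a => [a||]; case: b => [b||]; case=> //= hab hb;
case: u => [u||]; case: v => [v||] => //=; rewrite ?lee_fin ?lte_fin => hu huv hv //.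
- move: hab; rewrite lte_fin => hab.
  rewrite ltr_pM2r ?invr_gt0 ?subr_gt0 //; lra.
- have ha : 0 < u by lra.
  have hv' : 0 < v by lra.
  rewrite ltrD2l ltrN2 ltr_pM2l // ltf_pV2 ?posrE //.
- have ha : 0 < a / u by rewrite divr_gt0 //; lra.
  lra.
- have hu' : u < 0 by lra.
  have hv' : v < 0 by lra.
  rewrite ltr_nM2l // ltf_nV2 ?negrE //.
- rewrite nmulr_rgt0 // invr_lt0; lra.
Qed.

Lemma lam2_mono (R : realType) (a b u v : \bar R) :
  admissible_interval a b -> (a <= u)%E -> (u <= v)%E -> (v <= b)%E ->
  lam2 a b u <= lam2 a b v.
Proof.
move=> H hu; rewrite le_eqVlt => /orP[/eqP -> //|huv] hv.
exact/ltW/lam2_strict.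
Qed.

Lemma lam2_a (R : realType) (a b : \bar R) :
  admissible_interval a b -> lam2 a b a = 0.
Proof.
case: a => [a||]; case: b => [b||]; case=> //= hab hb.
- by rewrite subrr mul0r.
- by rewrite divff ?subrr // gt_eqF.
Qed.

Lemma lam2_b (R : realType) (a b : \bar R) :
  admissible_interval a b -> lam2 a b b = 1.
Proof.
case: a => [a||]; case: b => [b||]; case=> //= hab hb.
- by rewrite divff // subr_eq0 gt_eqF // -lte_fin.
- by rewrite divff // lt_eqF.
Qed.
Arguments lam2_a {R a b}. Arguments lam2_b {R a b}.
Arguments lam2_mono {R a b u v}. Arguments lam2_strict {R a b u v}.

Theorem corollary2 (R : realType) (x1 x2 y1 y2 : \bar R)
  (A : \bar R -> \bar R -> R) :
  admissible_rectangle x1 x2 y1 y2 ->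
  A x1 y1 <= A x2 y1 -> A x1 y2 <= A x2 y2 ->
  A x1 y1 <= A x1 y2 -> A x2 y1 <= A x2 y2 ->
  let B := bilinear_interp x1 x2 y1 y2 A in
  (forall y u v : \bar R, (y1 <= y)%E -> (y <= y2)%E ->
     (x1 <= u)%E -> (u <= v)%E -> (v <= x2)%E -> B u y <= B v y) /\
  (forall x u v : \bar R, (x1 <= x)%E -> (x <= x2)%E ->
     (y1 <= u)%E -> (u <= v)%E -> (v <= y2)%E -> B x u <= B x v) /\
  (forall u1 u2 v1 v2 : \bar R,
     (x1 <= u1)%E -> (u1 < u2)%E -> (u2 <= x2)%E ->
     (y1 <= v1)%E -> (v1 < v2)%E -> (v2 <= y2)%E ->
     [/\ 0 < volume B u1 u2 v1 v2 <-> 0 < volume B x1 x2 y1 y2,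
         volume B u1 u2 v1 v2 < 0 <-> volume B x1 x2 y1 y2 < 0 &
         volume B u1 u2 v1 v2 = 0 <-> volume B x1 x2 y1 y2 = 0]).
Proof.
move=> [Hx Hy] h1 h2 h3 h4 B.
set l := lam2 x1 x2; set m := lam2 y1 y2.
set D := (A x1 y1 + A x2 y2 - A x2 y1 - A x1 y2).
have BE x y : B x y = A x1 y1 + l x * (A x2 y1 - A x1 y1)
   + m y * (A x1 y2 - A x1 y1) + l x * m y * D.
  rewrite /B /bilinear_interp /lam1 /l /m /D; ring.
have VE u1 u2 v1 v2 : volume B u1 u2 v1 v2 = (l u2 - l u1) * (m v2 - m v1) * D.
  rewrite /volume !BE; ring.
have hx1 : (x1 <= x2)%E by apply/ltW; case: Hx.
have hy1 : (y1 <= y2)%E by apply/ltW; case: Hy.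
have lr x : (x1 <= x)%E -> (x <= x2)%E -> 0 <= l x <= 1.
  move=> a b; rewrite -(lam2_a Hx) -(lam2_b Hx).
  by rewrite !lam2_mono.
have mr x : (y1 <= x)%E -> (x <= y2)%E -> 0 <= m x <= 1.
  move=> a b; rewrite -(lam2_a Hy) -(lam2_b Hy).
  by rewrite !lam2_mono.
split; [|split].
- move=> y u v a b c d e.
  have := lam2_mono Hx c d e; rewrite -/l => luv.
  have /andP[m0 m1] := mr y a b.
  rewrite !BE -subr_ge0.
  have -> : A x1 y1 + l v * (A x2 y1 - A x1 y1) + m y * (A x1 y2 - A x1 y1) +
     l v * m y * D - (A x1 y1 + l u * (A x2 y1 - A x1 y1) + m y * (A x1 y2 - A x1 y1) +
     l u * m y * D) = (l v - l u) * ((1 - m y) * (A x2 y1 - A x1 y1) + m y * (A x2 y2 - A x1 y2)).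
    rewrite /D; ring.
  apply: mulr_ge0; first by rewrite subr_ge0.
  apply: addr_ge0; apply: mulr_ge0; rewrite ?subr_ge0 //.
- move=> x u v a b c d e.
  have := lam2_mono Hy c d e; rewrite -/m => muv.
  have /andP[m0 m1] := lr x a b.
  rewrite !BE -subr_ge0.
  have -> : A x1 y1 + l x * (A x2 y1 - A x1 y1) + m v * (A x1 y2 - A x1 y1) +
     l x * m v * D - (A x1 y1 + l x * (A x2 y1 - A x1 y1) + m u * (A x1 y2 - A x1 y1) +
     l x * m u * D) = (m v - m u) * ((1 - l x) * (A x1 y2 - A x1 y1) + l x * (A x2 y2 - A x2 y1)).
    rewrite /D; ring.
  apply: mulr_ge0; first by rewrite subr_ge0.
  apply: addr_ge0; apply: mulr_ge0; rewrite ?subr_ge0 //.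
- move=> u1 u2 v1 v2 a b c d e f.
  have P : 0 < (l u2 - l u1) * (m v2 - m v1).
    by apply: mulr_gt0; rewrite subr_gt0; apply: lam2_strict.
  rewrite !VE /l /m (lam2_a Hx) (lam2_b Hx) (lam2_a Hy) (lam2_b Hy) -/l -/m.
  rewrite !subr0 !mul1r.
  split.
  + by rewrite pmulr_rgt0.
  + by rewrite pmulr_rlt0.
  + split; first by move/eqP; rewrite mulf_eq0 (gt_eqF P) /= => /eqP.
    by move->; rewrite mulr0.
Qed.
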